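(* In the setting of the context (soft interventions, one per latent node, generic parameters), for $k\in[q]$ let $\Delta^{(k)}=(I-\Lambda^{(k)})^{-1}-(I-\Lambda^{(0)})^{-1}$. Then $\operatorname{rank}(\Delta^{(k)})\le1$, with equality if and only if $\mathrm{an}(k)\neq\emptyset$.
   Context: $\Lambda^{(0)}\in\mathbb{R}^{q\times q}$ has $\lambda^{(0)}_{i,j}\ne0$ iff $j\to i$ is an edge of a DAG $\mathcal{G}$ on $[q]$, with generic nonzero entries. For each $k\in[q]$, context $k$ is a soft intervention on node $k$: $\Lambda^{(k)}$ agrees with $\Lambda^{(0)}$ except in row $k$, whose entries are generic with $\lambda^{(k)}_{k,j}\ne\lambda^{(0)}_{k,j}$ whenever $\lambda^{(0)}_{k,j}\ne0$ and $\lambda^{(k)}_{k,j}=0$ otherwise. $\mathrm{an}(k)$ is the set of ancestors of $k$ in $\mathcal{G}$ (nodes $m\ne k$ with a directed path $m\to\cdots\to k$). *)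

(* Defs.v *)
From HB Require Import structures.
From mathcomp Require Import all_boot all_order all_algebra.
Set Implicit Arguments. Unset Strict Implicit. Unset Printing Implicit Defensive.
Import Order.TTheory GRing.Theory Num.Theory.
Local Open Scope ring_scope.

(* A directed graph on [q] = 'I_q is a relation E; E j i means the edge j -> i. *)

Definition is_dag (q : nat) (E : rel 'I_q) : Prop :=
  forall i j : 'I_q, E j i -> ~~ connect E i j.

Definition ancestors (q : nat) (E : rel 'I_q) (k : 'I_q) : {set 'I_q} :=
  [set m | (m != k) && connect E m k].

Definition supported_on (R : nzRingType) (q : nat) (E : rel 'I_q) (L : 'M[R]_q) : Prop :=
  forall i j : 'I_q, (L i j != 0) = E j i.

Definition soft_intervention (R : nzRingType) (q : nat) (k : 'I_q) (L0 Lk : 'M[R]_q) : Prop :=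
  [/\ forall i j : 'I_q, i != k -> Lk i j = L0 i j,
      forall j : 'I_q, L0 k j != 0 -> Lk k j != L0 k j
    & forall j : 'I_q, L0 k j = 0 -> Lk k j = 0].

Definition Delta (R : comUnitRingType) (q : nat) (L0 Lk : 'M[R]_q) : 'M[R]_q :=
  invmx (1%:M - Lk) - invmx (1%:M - L0).

(* Main.v *)
Require Import Defs.
From HB Require Import structures.
From mathcomp Require Import all_boot all_order all_algebra.
From mathcomp Require Import ring.
Import Order.TTheory GRing.Theory Num.Theory.
Local Open Scope ring_scope.

Lemma dag_unit (R : fieldType) (q : nat) (E : rel 'I_q) (L : 'M[R]_q) :
  is_dag E -> (forall i j, L i j != 0 -> E j i) -> (1%:M - L) \in unitmx.
Proof.
move=> dag sup; rewrite -row_free_unit; apply: inj_row_free => u Hu.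
apply/eqP; apply: contraT => unz.
have [j0 Hj0] : exists j, u 0 j != 0.
  apply/existsP; apply: contraT; rewrite negb_exists => /forallP H.
  move/negP: unz => unz. exfalso; apply: unz; apply/eqP/matrixP => a b; rewrite ord1 mxE; apply/eqP; move: (H b); rewrite negbK; apply.
pose D j := #|[set m | connect E j m]|.
case: (@arg_minnP _ j0 (fun j => u 0 j != 0) D Hj0) => j Hj Hmin.
have uL : u = u *m L by apply/eqP; rewrite -subr_eq0 -{1}(mulmx1 u) -mulmxBr Hu.
have : u 0 j != 0 by [].
rewrite {1}uL mxE => Hs.
have [i Hi] : exists i, u 0 i * L i j != 0.
  apply/existsP; apply: contraT; rewrite negb_exists => /forallP H.
  move: Hs; rewrite big1 ?eqxx // => i _. apply/eqP; move: (H i); by rewrite negbK.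
move: Hi; rewrite mulf_eq0 negb_or => /andP[ui Lij].
have Eji := sup _ _ Lij.
suff Hlt : (D i < D j)%N by move: (Hmin i ui); rewrite leqNgt Hlt.
apply: proper_card; apply/properP; split.
  apply/subsetP => m; rewrite !inE => cim.
  by apply: connect_trans cim; apply: connect1.
exists j; rewrite !inE ?connect0 //.
exact: dag.
Qed.

Theorem proposition3p7 (R : realFieldType) (q : nat) (E : rel 'I_q)
    (L0 Lk : 'M[R]_q) (k : 'I_q) :
  is_dag E -> supported_on E L0 -> soft_intervention k L0 Lk ->
  (\rank (Delta L0 Lk) <= 1)%N /\
  ((\rank (Delta L0 Lk) == 1%N) <-> ancestors E k != set0).
Proof.
move=> dag sup [Hout Hne Hz].
have sup0 : forall i j, L0 i j != 0 -> E j i by move=> i j; rewrite sup.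
have supk : forall i j, Lk i j != 0 -> E j i.
  move=> i j; case: (eqVneq i k) => [->|ik]; last by rewrite Hout // sup.
  case: (eqVneq (L0 k j) 0) => [h|h]; first by rewrite Hz // eqxx.
  by rewrite -sup h.
have U0 := @dag_unit _ _ _ _ dag sup0; have Uk := @dag_unit _ _ _ _ dag supk.
set M := Lk - L0.
have DE : Delta L0 Lk = invmx (1%:M - Lk) *m M *m invmx (1%:M - L0).
  rewrite /Delta /M.
  have -> : Lk - L0 = (1%:M - L0) - (1%:M - Lk).
    by apply/matrixP => a b; rewrite !mxE; ring.
  by rewrite mulmxBr mulVmx // mulmxBl mulmxK // mul1mx.
have rkD : \rank (Delta L0 Lk) = \rank M.
  rewrite DE mxrankMfree ?row_free_unit ?unitmx_inv //.
  by rewrite -mxrank_tr trmx_mul mxrankMfree ?mxrank_tr // row_free_unit unitmx_tr unitmx_inv.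
have Mrow : forall a b, a != k -> M a b = 0.
  by move=> a b ak; rewrite /M !mxE Hout // subrr.
have Mfac : M = (delta_mx k (0 : 'I_1) : 'cV_q) *m row k M.
  apply/matrixP => a b; rewrite !mxE big_ord1 !mxE eqxx andbT.
  case: (eqVneq a k) => [->|ak]; first by rewrite mul1r.
  by rewrite mul0r Hout // subrr.
have rkle : (\rank M <= 1)%N.
  by rewrite Mfac; apply: leq_trans (mxrankM_maxl _ _) (rank_leq_col _).
rewrite rkD; split => //.
have r1 : (\rank M == 1)%N = (M != 0).
  by rewrite -mxrank_eq0; move: rkle; case: (\rank M) => [|[|]].
rewrite r1.
have step1 : (M != 0) <-> exists j, L0 k j != 0.
  split.
    move=> Mn0.
    have /existsP[a /existsP[b Hab]] : [exists a, exists b, M a b != 0].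
      apply: contraT; rewrite negb_exists => /forallP H.
      move/negP: Mn0 => Mn0; exfalso; apply: Mn0; apply/eqP/matrixP => a b.
      rewrite [X in _ = X]mxE; apply/eqP; move: (H a); rewrite negb_exists => /forallP/(_ b); by rewrite negbK.
    case: (eqVneq a k) => [ak|ak]; last by move: Hab; rewrite Mrow ?eqxx.
    subst a; exists b; apply: contraT; rewrite negbK => /eqP h.
    by move: Hab; rewrite /M !mxE Hz // h subrr eqxx.
  case=> j hj; apply/eqP => M0.
  have := congr1 (fun A : 'M[R]_q => A k j) M0.
  rewrite /M !mxE => /eqP; rewrite subr_eq0; apply/negP; exact: Hne.
rewrite step1; split.
  case=> j hj; apply/set0Pn; exists j; rewrite inE.
  have Ejk : E j k by rewrite -sup.
  apply/andP; split; last exact: connect1.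
  apply/eqP => ejk; subst j; move: (dag _ _ Ejk); by rewrite connect0.
case/set0Pn => m; rewrite inE => /andP[mk /connectP[p pth lst]].
move: pth lst; case/lastP: p => [|p' x].
  by move=> _ /= km; move: mk; rewrite km eqxx.
rewrite rcons_path last_rcons => /andP[_ Ex] xk; subst x.
by exists (last m p'); rewrite sup.
Qed.
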